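(* The allocation rule of the Uniform Price Auction is monotone: for every agent $i$, every profile of the other agents' values $v_{-i}$, and fixed budgets, the map $v_i\mapsto x_i(v_i,v_{-i})$ is non-decreasing.
   Context: Uniform Price Auction: one unit of a divisible good, $n$ agents with values per unit $v_i>0$ and publicly known budgets $B_i>0$. Relabel agents so that $v_1\ge\dots\ge v_n$ and set $v_{n+1}=0$. Let $k\in\{0,\dots,n\}$ be the largest integer with $\sum_{j=1}^kB_j\le v_k$ (the empty sum is $0$, and $k=0$ is always admissible). Case I: if $\sum_{j=1}^kB_j>v_{k+1}$, allocate $x_i=B_i/\sum_{j=1}^kB_j$ for $i\le k$ and $0$ to everyone else. Case II: if $\sum_{j=1}^kB_j\le v_{k+1}$, allocate $x_i=B_i/v_{k+1}$ for $i\le k$, $x_{k+1}=1-\sum_{j=1}^kx_j$, and $0$ to everyone else. Payments are given by Myerson's formula $\pi_i(v)=v_ix_i(v)-\int_0^{v_i}x_i(u,v_{-i})\,du$. *)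

(* Defs.v *)
From mathcomp Require Import all_boot all_order all_algebra.
Set Implicit Arguments. Unset Strict Implicit. Unset Printing Implicit Defensive.
Import Order.TTheory GRing.Theory Num.Theory.
Local Open Scope ring_scope.

Section UPA.
Variables (R : realFieldType) (n : nat).
Variables (B v : 'I_n -> R).

Definition upa_before (i j : 'I_n) : bool :=
  (v j < v i) || ((v i == v j) && (i <= j)%N).

Definition upa_order : seq 'I_n := sort upa_before (enum 'I_n).

(* 0-based: upa_val k = v_{k+1} of the paper; upa_val n = v_{n+1} = 0. *)
Definition upa_val (k : nat) : R := nth 0 (map v upa_order) k.
Definition upa_bud (k : nat) : R := nth 0 (map B upa_order) k.

(* sum_{j=1}^k B_j (paper indexing) *)
Definition upa_S (k : nat) : R := \sum_(j < k) upa_bud j.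

(* k admissible: sum_{j=1}^k B_j <= v_k (k = 0 always admissible) *)
Definition upa_adm (k : nat) : bool := (k == 0)%N || (upa_S k <= upa_val k.-1).

Definition upa_k : nat := (\max_(k < n.+1 | upa_adm k) (k : nat))%N.

Definition upa_alloc (i : 'I_n) : R :=
  let k := upa_k in
  let p := index i upa_order in
  if upa_val k < upa_S k then
    (if (p < k)%N then B i / upa_S k else 0)
  else
    (if (p < k)%N then B i / upa_val k
     else if p == k then 1 - \sum_(j < k) (upa_bud j / upa_val k)
     else 0).
End UPA.

(* Main.v *)
Require Import Defs.
From mathcomp Require Import all_boot all_order all_algebra.
From mathcomp Require Import lra.
Set Implicit Arguments. Unset Strict Implicit. Unset Printing Implicit Defensive.
Import Order.TTheory GRing.Theory Num.Theory.
Local Open Scope ring_scope.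

Section Gen.
Variables (R : realFieldType) (n : nat) (B w : 'I_n -> R).
Hypothesis hB : forall j, 0 < B j.
Hypothesis hw : forall j, 0 < w j.

Local Notation bef := (upa_before w).
Local Notation s := (upa_order w).
Local Notation idx l := (index l (upa_order w)).

Lemma bef_total : total bef.
Proof.
move=> a b; rewrite /upa_before.
case: (ltrgtP (w a) (w b)) => //= _; exact: leq_total.
Qed.

Lemma bef_trans : transitive bef.
Proof.
move=> b a c; rewrite /upa_before.
case/orP=> [h1|/andP[/eqP e1 h1]]; case/orP=> [h2|/andP[/eqP e2 h2]].
- by rewrite (lt_trans h2 h1).
- by rewrite -e2 h1.
- by rewrite e1 h2.
- by rewrite e1 e2 eqxx (leq_trans h1 h2) orbT.
Qed.

Lemma bef_refl : reflexive bef.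
Proof. by move=> a; rewrite /upa_before eqxx leqnn orbT. Qed.

Lemma bef_anti a b : bef a b -> bef b a -> a = b.
Proof.
rewrite /upa_before.
case/orP=> [h1|/andP[/eqP e1 h1]]; case/orP=> [h2|/andP[/eqP e2 h2]].
- by move: (lt_trans h1 h2); rewrite ltxx.
- by move: h1; rewrite e2 ltxx.
- by move: h2; rewrite e1 ltxx.
- by apply: val_inj; apply/eqP; rewrite eqn_leq h1 h2.
Qed.

Lemma bef_val a b : bef a b -> w b <= w a.
Proof. by rewrite /upa_before => /orP[/ltW|/andP[/eqP -> _]]. Qed.

Lemma mem_s l : l \in s.
Proof. by rewrite mem_sort mem_enum. Qed.

Lemma size_s : size s = n.
Proof. by rewrite size_sort size_enum_ord. Qed.

Lemma sorted_s : sorted bef s.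
Proof. rewrite /upa_order; apply: sort_sorted; exact: bef_total. Qed.

Lemma idx_lt_n l : (idx l < n)%N.
Proof. by rewrite -[X in (_ < X)%N]size_s index_mem mem_s. Qed.

Lemma nth_idx x0 l : nth x0 s (idx l) = l.
Proof. by rewrite nth_index // mem_s. Qed.

Lemma idx_lt l j : (idx l < idx j)%N = (l != j) && bef l j.
Proof.
apply/idP/idP.
- move=> h; apply/andP; split.
    by apply/eqP=> e; move: h; rewrite e ltnn.
  exact: (sorted_ltn_index bef_trans sorted_s l j (mem_s l) (mem_s j)).
- case/andP=> ne h; case: (ltngtP (idx l) (idx j)) => // h'.
    have := sorted_ltn_index bef_trans sorted_s j l (mem_s j) (mem_s l) h'.
    by move/(bef_anti h)=> e; rewrite e eqxx in ne.
  by move: (congr1 (nth l s) h'); rewrite !nth_idx => e; rewrite e eqxx in ne.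
Qed.

Lemma idx_tot l j : l != j -> (idx l < idx j)%N \/ (idx j < idx l)%N.
Proof.
move=> ne; rewrite !idx_lt ne eq_sym ne /=.
by case/orP: (bef_total l j); auto.
Qed.

Lemma val_idx l : upa_val w (idx l) = w l.
Proof. by rewrite /upa_val (nth_map l) ?nth_idx // size_s idx_lt_n. Qed.

Lemma bud_idx l : upa_bud B w (idx l) = B l.
Proof. by rewrite /upa_bud (nth_map l) ?nth_idx // size_s idx_lt_n. Qed.

Lemma bud_ge0 k : 0 <= upa_bud B w k.
Proof.
rewrite /upa_bud; case: (ltnP k (size (map B s))) => h.
  by have /mapP[j _ ->] := mem_nth 0 h; apply: ltW.
by rewrite nth_default.
Qed.

Definition Sm j := \sum_(l | (idx l < idx j)%N) B l.
Definition T j := Sm j + B j.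
Definition adm j := T j <= w j.

Lemma S_succ k : upa_S B w k.+1 = upa_S B w k + upa_bud B w k.
Proof. by rewrite /upa_S big_ord_recr. Qed.

Lemma S_mono k m : (k <= m)%N -> upa_S B w k <= upa_S B w m.
Proof.
elim: m => [|m IH]; first by rewrite leqn0 => /eqP ->.
rewrite leq_eqVlt => /orP[/eqP -> //|]; rewrite ltnS => /IH h.
by rewrite S_succ (le_trans h) // lerDl bud_ge0.
Qed.

Lemma uniq_s : uniq s.
Proof. by rewrite /upa_order sort_uniq enum_uniq. Qed.
Lemma idx_nth k (x0 : 'I_n) : (k < n)%N -> idx (nth x0 s k) = k.
Proof. by move=> hk; rewrite index_uniq // ?size_s // uniq_s. Qed.
Lemma S_idx k : (k <= n)%N -> upa_S B w k = \sum_(l | (idx l < k)%N) B l.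
Proof.
elim: k => [|k IH] hk.
  by rewrite /upa_S big_ord0; apply/esym/big1 => l; rewrite ltn0.
have hk' : (k < n)%N by [].
set l0 := nth (Ordinal hk') s k.
have hl0 : idx l0 = k by rewrite idx_nth.
rewrite S_succ IH; last by apply: ltnW.
have hP : (idx l0 < k.+1)%N by rewrite hl0.
rewrite (bigD1 l0 hP) /=.
rewrite addrC; congr (_ + _); last by rewrite -hl0 bud_idx.
apply: eq_bigl => l; rewrite [in RHS]ltnS [in RHS]leq_eqVlt.
case: (eqVneq l l0) => [->|ne]; first by rewrite hl0 ltnn eqxx.
have : idx l != k by apply: contra ne => /eqP e; rewrite /l0 -[X in nth _ _ X]e nth_idx.
by move/negbTE => ->; rewrite andbT.
Qed.

Lemma Sm_eq j : Sm j = upa_S B w (idx j).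
Proof. by rewrite S_idx // ltnW // idx_lt_n. Qed.

Lemma T_eq j : T j = upa_S B w (idx j).+1.
Proof. by rewrite /T S_succ bud_idx Sm_eq. Qed.

Lemma val_n : upa_val w n = 0.
Proof. by rewrite /upa_val nth_default // size_map size_s. Qed.

Lemma val_ge0 k : 0 <= upa_val w k.
Proof.
rewrite /upa_val; case: (ltnP k (size (map w s))) => h.
  by have /mapP[j _ ->] := mem_nth 0 h; apply: ltW.
by rewrite nth_default.
Qed.

Lemma val_anti q r : (q <= r)%N -> (r <= n)%N -> upa_val w r <= upa_val w q.
Proof.
move=> hqr; rewrite leq_eqVlt => /orP[/eqP ->|hr]; first by rewrite val_n val_ge0.
have hq : (q < n)%N by apply: leq_ltn_trans hr.
rewrite /upa_val !(nth_map (Ordinal hq)) ?size_s //.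
apply: bef_val; apply: (sorted_leq_nth bef_trans bef_refl (Ordinal hq) sorted_s) => //.
all: by rewrite inE size_s.
Qed.

Local Notation K := (upa_k B w).

Lemma K_le_n : (K <= n)%N.
Proof. by apply/bigmax_leqP => k _; rewrite -ltnS. Qed.

Lemma K_adm : upa_adm B w K.
Proof.
rewrite /upa_k; apply: (big_ind (upa_adm B w)) => //.
by move=> x y hx hy /=; rewrite /maxn; case: ifP.
Qed.

Lemma adm_le_K k : (k <= n)%N -> upa_adm B w k -> (k <= K)%N.
Proof.
rewrite -ltnS => hk ha.
exact: (@leq_bigmax_cond _ (fun k : 'I_n.+1 => upa_adm B w k) (fun k : 'I_n.+1 => (k : nat)) (Ordinal hk)).
Qed.

Lemma adm_down k m : (k <= m)%N -> (m <= n)%N -> (0 < k)%N ->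
  upa_adm B w m -> upa_adm B w k.
Proof.
move=> hkm hm hk; rewrite /upa_adm; have -> : (m == 0)%N = false.
  by apply/negbTE; rewrite -lt0n (leq_trans hk).
have -> : (k == 0)%N = false by apply/negbTE; rewrite -lt0n.
rewrite /= => h.
apply: le_trans (S_mono hkm) _; apply: le_trans h _.
apply: val_anti; first by rewrite -!subn1 leq_sub2r.
by apply: leq_trans _ hm; apply: leq_pred.
Qed.

Lemma adm_iff j : adm j = (idx j < K)%N.
Proof.
have e : adm j = upa_adm B w (idx j).+1 by rewrite /adm /upa_adm /= T_eq val_idx.
rewrite e; apply/idP/idP => [h|h].
  by apply: adm_le_K => //; apply: idx_lt_n.
by apply: (adm_down h K_le_n) => //; apply: K_adm.
Qed.

Definition P := Num.max (upa_S B w K) (upa_val w K).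

Lemma P_ge_adm j : adm j -> T j <= P.
Proof.
rewrite adm_iff T_eq => h.
by apply: le_trans (S_mono h) _; rewrite le_max lexx.
Qed.

Lemma P_ge_nadm l : ~~ adm l -> w l <= P.
Proof.
rewrite adm_iff -leqNgt => h.
rewrite -val_idx; apply: le_trans (val_anti h (ltnW (idx_lt_n l))) _.
by rewrite le_max lexx orbT.
Qed.

Lemma P_le (i0 : 'I_n) X : (forall j, adm j -> T j <= X) ->
  (forall l, ~~ adm l -> w l <= X) -> P <= X.
Proof.
move=> h1 h2.
have X0 : 0 <= X.
  case: (boolP (adm i0)) => a.
    by apply: le_trans (h1 _ a); rewrite /T ltW // ltr_wpDl ?hB // sumr_ge0 // => l _; apply: ltW.
  by apply: le_trans (h2 _ a); apply: ltW.
have hn : (0 < n)%N by case: i0 => m hm; apply: leq_ltn_trans hm.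
rewrite ge_max; apply/andP; split.
  case: (posnP K) => [->|hK]; first by rewrite /upa_S big_ord0.
  have hK' : (K.-1 < n)%N by rewrite prednK // K_le_n.
  set j := nth (Ordinal hK') s K.-1.
  have hj : idx j = K.-1 by rewrite /j idx_nth.
  have aj : adm j by rewrite adm_iff hj prednK.
  by have := h1 _ aj; rewrite T_eq hj prednK.
case: (ltnP K n) => hK; last first.
  have eK : K = n by apply/eqP; rewrite eqn_leq K_le_n.
  by rewrite eK val_n.
set l := nth (Ordinal hK) s K.
have hl : idx l = K by rewrite /l idx_nth.
have al : ~~ adm l by rewrite adm_iff hl ltnn.
by have := h2 _ al; rewrite -val_idx hl.
Qed.

Lemma P_pos (i0 : 'I_n) : 0 < P.
Proof.
case: (boolP (adm i0)) => a.
  by apply: lt_le_trans (P_ge_adm a); rewrite /T ltr_wpDl ?hB // sumr_ge0 // => l _; apply: ltW.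
by apply: lt_le_trans (P_ge_nadm a).
Qed.

Lemma alloc_adm i : adm i -> upa_alloc B w i = B i / P.
Proof.
rewrite adm_iff /upa_alloc /P => ->.
by case: ltP.
Qed.

Lemma alloc_marg i : ~~ adm i -> (forall j, (idx j < idx i)%N -> adm j) ->
  upa_alloc B w i = if w i < Sm i then 0 else 1 - Sm i / w i.
Proof.
move=> ai h.
have hK : idx i = K.
  have hK1 : (K <= idx i)%N by rewrite leqNgt -adm_iff.
  have hK2 : ~~ (K < idx i)%N.
    apply/negP => lt.
    have hK' : (K < n)%N by apply: ltn_trans lt (idx_lt_n i).
    set j := nth (Ordinal hK') s K.
    have hj : idx j = K by rewrite /j idx_nth.
    by move: (h j); rewrite adm_iff hj ltnn => /(_ lt).
  by apply/eqP; rewrite eqn_leq hK1 andbT leqNgt.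
rewrite /upa_alloc hK ltnn eqxx Sm_eq hK -(val_idx i) hK.
by case: ltP => //; rewrite /upa_S -mulr_suml.
Qed.

Lemma alloc_zero i j : ~~ adm i -> (idx j < idx i)%N -> ~~ adm j ->
  upa_alloc B w i = 0.
Proof.
rewrite !adm_iff -!leqNgt => hi hji hj.
have h : (K < idx i)%N by apply: leq_ltn_trans hj hji.
by rewrite /upa_alloc ltnNge (ltnW h) /= gtn_eqF //; case: ifP.
Qed.

Lemma alloc_ge0 i : 0 <= upa_alloc B w i.
Proof.
case: (boolP (adm i)) => a.
  by rewrite alloc_adm // divr_ge0 // ltW // ?hB // (P_pos i).
case: (boolP [forall j, (idx j < idx i)%N ==> adm j]) => h.
  rewrite alloc_marg //; last by move=> j; move/forallP: h => /(_ j) /implyP.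
  case: ltP => // hs; rewrite subr_ge0 ler_pdivrMr ?hw // mul1r //.
move: h; rewrite negb_forall => /existsP [j]; rewrite negb_imply => /andP[h1 h2].
by rewrite (alloc_zero a h1 h2).
Qed.
End Gen.

Section Main.
Variables (R : realFieldType) (n : nat) (B : 'I_n -> R).
Hypothesis hB : forall j, 0 < B j.
Variables (i : 'I_n) (v v' : 'I_n -> R).
Hypotheses (hv : forall j, 0 < v j) (hv' : forall j, 0 < v' j).
Hypothesis hother : forall j, j != i -> v j = v' j.
Hypothesis hle : v i <= v' i.

Local Notation I l := (index l (upa_order v)).
Local Notation I' l := (index l (upa_order v')).

Lemma sum_le_pred (p q : pred 'I_n) : (forall l, p l -> q l) ->
  \sum_(l | p l) B l <= \sum_(l | q l) B l.
Proof.
move=> h; rewrite [X in _ <= X](bigID p) /=.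
rewrite (eq_bigl p); last by move=> l /=; case: (boolP (p l)) => pl; [rewrite (h _ pl) | rewrite andbF].
by rewrite lerDl sumr_ge0 // => l _; apply: ltW.
Qed.

Lemma sum_add1 (p q : pred 'I_n) : ~~ p i -> q i ->
  (forall l, l != i -> q l = p l) ->
  \sum_(l | q l) B l = \sum_(l | p l) B l + B i.
Proof.
move=> pi qi h; rewrite (bigD1 i) //= addrC; congr (_ + _).
apply: eq_bigl => l; case: (eqVneq l i) => [->|li]; first by rewrite (negbTE pi) andbF.
by rewrite andbT h.
Qed.

Lemma Tj_le_Sm (w : 'I_n -> R) (hw : forall j, 0 < w j) j k :
  (index j (upa_order w) < index k (upa_order w))%N -> T B w j <= Sm B w k.
Proof. by move=> h; rewrite T_eq Sm_eq //; apply: S_mono. Qed.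

Lemma adm_down_idx (w : 'I_n -> R) (hw : forall j, 0 < w j) j k :
  (index j (upa_order w) < index k (upa_order w))%N -> adm B w k -> adm B w j.
Proof. by move=> h; rewrite !(adm_iff hB hw) => /(ltn_trans h). Qed.

Lemma bef_same l j : l != i -> j != i -> upa_before v' l j = upa_before v l j.
Proof. by move=> li ji; rewrite /upa_before -!hother. Qed.

Lemma O1 l j : l != i -> j != i -> (I' l < I' j)%N = (I l < I j)%N.
Proof. by move=> li ji; rewrite !idx_lt bef_same. Qed.

Lemma O2 j : j != i -> (I i < I j)%N -> (I' i < I' j)%N.
Proof.
move=> ji; rewrite !idx_lt => /andP[ne b]; rewrite ne /=; move: b.
rewrite /upa_before -(hother ji) => /orP[h|/andP[/eqP e h]].
  by rewrite (lt_le_trans h hle).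
case: (eqVneq (v' i) (v j)) => [_|ne']; first by rewrite h orbT.
by rewrite lt_neqAle eq_sym ne' -e hle.
Qed.

Lemma O2' j : j != i -> (I' j < I' i)%N -> (I j < I i)%N.
Proof.
move=> ji h; case: (idx_tot v ji) => // /(O2 ji) h'.
by move: (ltn_trans h h'); rewrite ltnn.
Qed.

Lemma Smi : Sm B v' i <= Sm B v i.
Proof.
apply: sum_le_pred => l h; case: (eqVneq l i) => [e|li].
  by move: h; rewrite e ltnn.
exact: O2'.
Qed.

Lemma Sm_same l : l != i -> (I i < I l)%N = (I' i < I' l)%N -> Sm B v' l = Sm B v l.
Proof.
move=> li h; apply: eq_bigl => m; case: (eqVneq m i) => [->|mi]; first by rewrite h.
by rewrite O1.
Qed.

Lemma Tcase l : l != i ->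
  (T B v' l = T B v l) \/
  [/\ (I l < I i)%N, (I' i < I' l)%N & T B v' l = T B v l + B i].
Proof.
move=> li; rewrite /T.
case: (idx_tot v li) => h.
  case: (idx_tot v' li) => h'.
    left; rewrite Sm_same // ; apply/idP/idP => H.
      by move: (ltn_trans h H); rewrite ltnn.
    by move: (ltn_trans h' H); rewrite ltnn.
  right; split => //; rewrite -addrA [B l + _]addrC addrA; congr (_ + _).
  apply: sum_add1 => //=; first by rewrite -leqNgt ltnW.
  by move=> m mi; rewrite O1.
by left; rewrite Sm_same // h (O2 li h).
Qed.

Lemma Tpred l : l != i -> (I' l < I' i)%N -> T B v' l = T B v l.
Proof.
move=> li h; case: (Tcase li) => // [[_ h' _]].
by move: (ltn_trans h h'); rewrite ltnn.
Qed.


Lemma caseA : adm B v i -> upa_alloc B v i <= upa_alloc B v' i.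
Proof.
move=> ai.
have aT : T B v' i <= T B v i by rewrite /T lerD2r Smi.
have ai' : adm B v' i by rewrite /adm (le_trans aT) // (le_trans ai).
rewrite (alloc_adm hB hv ai) (alloc_adm hB hv' ai').
have P'le : P B v' <= P B v.
  apply: (P_le hB hv' i) => [j aj'|l nl'].
    case: (eqVneq j i) => [->|ji]; first exact: le_trans aT (P_ge_adm hB hv ai).
    case: (Tcase ji) => [e|[h1 h2 e]].
      rewrite e; apply: (P_ge_adm hB hv); rewrite /adm -e (hother ji); exact: aj'.
    rewrite e; apply: le_trans (P_ge_adm hB hv ai).
    by rewrite [X in _ <= X]/T lerD2r; exact: (Tj_le_Sm hv h1).
  have li : l != i by apply: contraNneq nl' => ->.
  case: (boolP (adm B v l)) => al; last by rewrite -(hother li) (P_ge_nadm hB hv al).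
  exfalso; move/negP: nl'; apply; rewrite /adm.
  case: (Tcase li) => [e|[h1 h2 e]]; first by rewrite e -(hother li).
  rewrite e -(hother li); apply: (@le_trans _ _ (T B v i)).
    by rewrite [X in _ <= X]/T lerD2r; exact: (Tj_le_Sm hv h1).
  apply: le_trans ai (bef_val _); move: h1; rewrite idx_lt => /andP[_ b]; exact: b.
apply: ler_wpM2l; first exact: ltW.
rewrite lef_pV2 ?posrE ?(P_pos hB hv i) ?(P_pos hB hv' i) //.
Qed.


Lemma frac_ineq (Sm0 Bi vi : R) : 0 <= Sm0 -> 0 < Bi -> 0 < vi -> vi < Sm0 + Bi ->
  1 - Sm0 / vi <= Bi / (Sm0 + Bi).
Proof.
move=> hS hBi hvi hT.
have hTp : 0 < Sm0 + Bi by apply: lt_trans hT.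
rewrite ler_pdivlMr //.
set u := vi^-1.
have hu : vi * u = 1 by rewrite /u divff // gt_eqF.
have hu0 : 0 < u by rewrite /u invr_gt0.
have h1 : 1 <= u * (Sm0 + Bi) by rewrite -hu; nra.

nra.
Qed.

Lemma caseB : ~~ adm B v i -> (forall j, (I j < I i)%N -> adm B v j) ->
  upa_alloc B v i <= upa_alloc B v' i.
Proof.
move=> ai h.
rewrite (alloc_marg hB hv ai h).
case: ltP => hs; first exact: alloc_ge0.
have vT : v i < T B v i by rewrite ltNge.
have pre' : forall j, (I' j < I' i)%N -> adm B v' j.
  move=> j hj; have ji : j != i by apply: contraTneq hj => ->; rewrite ltnn.
  by rewrite /adm (Tpred ji hj) -(hother ji); apply: h; apply: O2'.
case: (boolP (adm B v' i)) => ai'.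
  rewrite (alloc_adm hB hv' ai').
  have P'le : P B v' <= T B v i.
    apply: (P_le hB hv' i) => [j aj'|l nl'].
      case: (eqVneq j i) => [->|ji]; first by rewrite /T lerD2r Smi.
      case: (Tcase ji) => [e|[h1 h2 e]].
        rewrite e; case: (idx_tot v ji) => hji.
          apply: le_trans (Tj_le_Sm hv hji) _; rewrite /T lerDl; exact: ltW.
        exfalso; move/negP: ai; apply.
        apply: (adm_down_idx hv hji); rewrite /adm -e (hother ji); exact: aj'.
      by rewrite e [X in _ <= X]/T lerD2r; exact: (Tj_le_Sm hv h1).
    have li : l != i by apply: contraNneq nl' => ->.
    rewrite -(hother li); case: (idx_tot v li) => hli; last first.
      apply: le_trans (ltW vT); apply: bef_val; move: hli; rewrite idx_lt => /andP[_ b]; exact: b.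
    case: (Tcase li) => [e|[h1 h2 e]].
      exfalso; move/negP: nl'; apply; rewrite /adm e -(hother li); exact: h.
    have := nl'; rewrite /adm -ltNge e -(hother li) => /ltW hl; apply: le_trans hl _.
    by rewrite [X in _ <= X]/T lerD2r; exact: (Tj_le_Sm hv h1).
  have P'pos := P_pos hB hv' i.
  apply: le_trans (frac_ineq _ (hB i) (hv i) vT) _.
    by apply: sumr_ge0 => l _; apply: ltW.
  apply: ler_wpM2l; first exact: ltW.
  by rewrite lef_pV2 ?posrE // (lt_le_trans P'pos P'le).
rewrite (alloc_marg hB hv' ai' pre').
have hs' : Sm B v' i <= v' i.
  by apply: le_trans Smi _; apply: le_trans hs hle.
case: ltP => hs2; first by move: (lt_le_trans hs2 hs'); rewrite ltxx.
rewrite lerD2l lerN2; apply: ler_pM.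
- by apply: sumr_ge0 => l _; apply: ltW.
- by rewrite invr_ge0 ltW.
- exact: Smi.
- by rewrite lef_pV2 ?posrE.
Qed.

Theorem main_gen : upa_alloc B v i <= upa_alloc B v' i.
Proof.
case: (boolP (adm B v i)) => ai; first exact: caseA.
case: (boolP [forall j, (I j < I i)%N ==> adm B v j]) => h.
  by apply: caseB => // j hj; move/forallP: h => /(_ j) /implyP; apply.
move: h; rewrite negb_forall => /existsP [j]; rewrite negb_imply => /andP[h1 h2].
by rewrite (alloc_zero hB hv ai h1 h2) (alloc_ge0 hB hv').
Qed.

End Main.

Theorem mainTheorem6 (R : realFieldType) (n : nat) (B : 'I_n -> R)
  (hB : forall j, 0 < B j) (i : 'I_n) (v v' : 'I_n -> R)
  (hv : forall j, 0 < v j) (hv' : forall j, 0 < v' j)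
  (hother : forall j, j != i -> v j = v' j) (hle : v i <= v' i) :
  upa_alloc B v i <= upa_alloc B v' i.
Proof. exact: (main_gen hB hv hv' hother hle). Qed.
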